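(* Let $p\ge2$, $\theta>1$, $a>0$ and $\lambda>0$, and write $\phi_p(t)=|t|^{p-2}t$. Let $h\in C^1[0,a]$ be such that $r^{\theta-1}\phi_p(h')\in C^1(0,a)$ and \[ (r^{\theta-1}\phi_p(h'))'+\lambda r^{\theta-1}\phi_p(h)=0\quad\text{in }(0,a). \] Then: (1) $h'(0)=0$; (2) $r^{\theta-1}\phi_p(h')\in C^1[0,a)$; (3) $(r^{\theta-1}\phi_p(h'))'(0)=0$. *)

(* Defs.v *)
From Stdlib Require Import Reals Lra.
From Coquelicot Require Import Coquelicot.
Open Scope R_scope.

(* Real power x^y for x >= 0, with the usual convention 0^y = 0 for y <> 0
   and 0^0 = 1 (Stdlib's Rpower 0 y is 1, which is wrong for our purpose). *)
Definition rpow (x y : R) : R :=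
  if Rle_dec x 0 then (if Req_EM_T y 0 then 1 else 0) else Rpower x y.

(* phi_p(t) = |t|^(p-2) t.  At t = 0 the product is 0 whatever the power. *)
Definition phi (p t : R) : R := rpow (Rabs t) (p - 2) * t.

Definition C1_closed (h : R -> R) (a : R) (dh : R -> R) : Prop :=
  (forall r, 0 < r < a -> is_derive h r (dh r)) /\
  filterlim (fun x => (h x - h 0) / (x - 0)) (at_right 0) (locally (dh 0)) /\
  filterlim (fun x => (h x - h a) / (x - a)) (at_left a) (locally (dh a)) /\
  (forall r, 0 <= r <= a ->
     filterlim dh (within (fun x => 0 <= x <= a) (locally r)) (locally (dh r))).

Definition C1_open (f : R -> R) (a : R) : Prop :=
  forall r, 0 < r < a ->
    ex_derive f r /\ filterlim (Derive f) (locally r) (locally (Derive f r)).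

Definition C1_left_closed (f : R -> R) (a : R) (df : R -> R) : Prop :=
  (forall r, 0 < r < a -> is_derive f r (df r)) /\
  filterlim (fun x => (f x - f 0) / (x - 0)) (at_right 0) (locally (df 0)) /\
  (forall r, 0 <= r < a ->
     filterlim df (within (fun x => 0 <= x < a) (locally r)) (locally (df r))).

(* Main.v *)
Require Import Defs.
From Stdlib Require Import Reals Lra.
From Coquelicot Require Import Coquelicot.
Open Scope R_scope.

Lemma ballR (x e y : R) : ball x e y <-> Rabs (y - x) < e.
Proof. split; intro H; exact H. Qed.

Lemma rpow_nonneg x e : 0 <= rpow x e.
Proof. unfold rpow. destruct (Rle_dec x 0); [destruct (Req_EM_T e 0); lra|].
  unfold Rpower. left; apply exp_pos. Qed.

Lemma rpow_pos x e : 0 < x -> 0 < rpow x e.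
Proof. intro. unfold rpow. destruct (Rle_dec x 0); [lra|]. unfold Rpower; apply exp_pos. Qed.

Lemma rpow_zero e : e <> 0 -> rpow 0 e = 0.
Proof. intro. unfold rpow. destruct (Rle_dec 0 0); [|lra]. destruct (Req_EM_T e 0); lra. Qed.

Lemma rpow_mono x K e : 0 <= x <= K -> 0 < K -> 0 <= e -> rpow x e <= rpow K e.
Proof. intros Hx HK He. unfold rpow.
  destruct (Rle_dec K 0); [lra|].
  destruct (Rle_dec x 0).
  - destruct (Req_EM_T e 0).
    + subst. rewrite Rpower_O; lra.
    + unfold Rpower; left; apply exp_pos.
  - apply Rle_Rpower_l; lra. Qed.

Lemma rpow_small e eps : 0 < e -> 0 < eps -> exists d, 0 < d /\ forall x, 0 < x < d -> rpow x e < eps.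
Proof. intros He Heps. exists (exp (ln eps / e)). split. apply exp_pos.
  intros x Hx. unfold rpow. destruct (Rle_dec x 0); [lra|]. unfold Rpower.
  assert (ln x < ln eps / e). { rewrite <- (ln_exp (ln eps / e)). apply ln_increasing; lra. }
  rewrite <- (exp_ln eps) by lra. apply exp_increasing.
  apply Rmult_lt_compat_l with (r := e) in H; [|lra].
  replace (e * (ln eps / e)) with (ln eps) in H by (field; lra). lra. Qed.

Lemma abs_phi p t : Rabs (phi p t) = rpow (Rabs t) (p - 2) * Rabs t.
Proof. unfold phi. rewrite Rabs_mult. rewrite (Rabs_pos_eq (rpow _ _)) by apply rpow_nonneg. reflexivity. Qed.

Lemma phi_bound p t K : 2 <= p -> 0 < K -> Rabs t <= K -> Rabs (phi p t) <= rpow K (p-2) * K.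
Proof. intros Hp HK Ht. rewrite abs_phi. apply Rmult_le_compat; try apply rpow_nonneg; try apply Rabs_pos; auto.
  apply rpow_mono; try lra. split; [apply Rabs_pos|lra]. Qed.

Lemma phi_lbound p t c : 2 <= p -> 0 < c -> c <= Rabs t -> rpow c (p-2) * c <= Rabs (phi p t).
Proof. intros Hp Hc Ht. rewrite abs_phi. apply Rmult_le_compat; try apply rpow_nonneg; try lra.
  apply rpow_mono; lra. Qed.
Lemma ballR1 (x e y : R) : ball x e y -> Rabs (y - x) < e.
Proof. intro H; exact H. Qed.
Lemma within_eps (D : R -> Prop) (x l : R) (f : R -> R) :
  filterlim f (within D (locally x)) (locally l) ->
  forall eps : posreal, exists d : posreal, forall y, Rabs (y - x) < d -> D y -> Rabs (f y - l) < eps.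
Proof. intros H eps.
  destruct (proj1 (@filterlim_locally _ _ _ (within_filter _ _ _ (@filter_filter _ _ (locally_filter x))) f l) H eps) as [d Hd].
  exists d. intros y Hy Dy. apply ballR1. apply Hd; auto. Qed.
Theorem mainTheorem15 (p theta a lambda : R) (h dh : R -> R) :
  2 <= p -> 1 < theta -> 0 < a -> 0 < lambda ->
  C1_closed h a dh ->
  C1_open (fun r => rpow r (theta - 1) * phi p (dh r)) a ->
  (forall r, 0 < r < a ->
     Derive (fun s => rpow s (theta - 1) * phi p (dh s)) r
     + lambda * rpow r (theta - 1) * phi p (h r) = 0) ->
  dh 0 = 0 /\
  exists dw : R -> R,
    C1_left_closed (fun r => rpow r (theta - 1) * phi p (dh r)) a dw /\
    dw 0 = 0.
Proof.
  intros Hp Ht Ha Hl [Hh1 [Hh2 [_ Hh4]]] Hw Heq.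
  set (w := fun r => rpow r (theta - 1) * phi p (dh r)) in *.
  set (e := theta - 1).
  assert (He : 0 < e) by (unfold e; lra).
  set (K := Rabs (h 0) + Rabs (dh 0) + 1).
  assert (HK : 0 < K) by (unfold K; pose proof (Rabs_pos (h 0)); pose proof (Rabs_pos (dh 0)); lra).
  assert (HA : exists dh0, 0 < dh0 <= a /\ forall x, 0 < x < dh0 -> Rabs (h x) <= K).
  { destruct (proj1 (filterlim_locally _ _) Hh2 (mkposreal 1 Rlt_0_1)) as [d Hd].
    exists (Rmin (Rmin d 1) a). split. { split. apply Rmin_pos; [apply Rmin_pos; [apply cond_pos|lra]|lra]. apply Rmin_r. }
    intros x Hx. pose proof (Rmin_l (Rmin d 1) a). pose proof (Rmin_r (Rmin d 1) a).
    pose proof (Rmin_l d 1). pose proof (Rmin_r d 1).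
    assert (Hb : ball 0 d x) by (apply ballR; rewrite Rminus_0_r, Rabs_pos_eq; lra).
    specialize (Hd x Hb ltac:(lra)). apply ballR1 in Hd; simpl in Hd.
    rewrite Rminus_0_r in Hd.
    assert (Rabs (h x - h 0) <= (Rabs (dh 0) + 1) * x).
    { replace (h x - h 0) with ((h x - h 0) / x * x) by (field; lra).
      rewrite Rabs_mult, (Rabs_pos_eq x) by lra. apply Rmult_le_compat_r; [lra|].
      pose proof (Rabs_triang_inv ((h x - h 0) / x) (dh 0)). lra. }
    pose proof (Rabs_triang_inv (h x) (h 0)).
    assert ((Rabs (dh 0) + 1) * x <= Rabs (dh 0) + 1).
    { pose proof (Rabs_pos (dh 0)). nra. }
    unfold K; lra. }
  destruct HA as [dA [HdA HA]].
  set (B := rpow K (p-2) * K).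
  assert (HB : 0 <= B) by (unfold B; pose proof (rpow_nonneg K (p-2)); nra).
  assert (HBd : forall s, 0 < s < dA -> Rabs (Derive w s) <= lambda * B * rpow s e).
  { intros s Hs. assert (Derive w s = - (lambda * rpow s e * phi p (h s))).
    { specialize (Heq s ltac:(lra)). fold w in Heq. unfold e. lra. }
    rewrite H, Rabs_Ropp, !Rabs_mult, (Rabs_pos_eq lambda), (Rabs_pos_eq (rpow s e)) by (lra || apply rpow_nonneg).
    pose proof (phi_bound p (h s) K Hp HK (HA s Hs)). fold B in H0.
    pose proof (rpow_nonneg s e). 
    replace (lambda * B * rpow s e) with (lambda * rpow s e * B) by ring.
    apply Rmult_le_compat_l; [nra|lra]. }
  set (K2 := Rabs (dh 0) + 1).
  assert (HK2 : 0 < K2) by (unfold K2; pose proof (Rabs_pos (dh 0)); lra).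
  set (C := rpow K2 (p-2) * K2).
  assert (HC : 0 <= C) by (unfold C; pose proof (rpow_nonneg K2 (p-2)); nra).
  assert (HCd : exists dd, 0 < dd /\ forall x, 0 < x < dd -> Rabs (w x) <= rpow x e * C).
  { destruct (within_eps _ _ _ _ (Hh4 0 ltac:(lra)) (mkposreal 1 Rlt_0_1)) as [d Hd].
    exists (Rmin d a). split. apply Rmin_pos; [apply cond_pos|lra].
    intros x Hx. pose proof (Rmin_l d a). pose proof (Rmin_r d a).
    specialize (Hd x ltac:(rewrite Rminus_0_r, Rabs_pos_eq; lra) ltac:(lra)). simpl in Hd.
    pose proof (Rabs_triang_inv (dh x) (dh 0)).
    unfold w. rewrite Rabs_mult, Rabs_pos_eq by apply rpow_nonneg. fold e.
    apply Rmult_le_compat_l; [apply rpow_nonneg|]. apply phi_bound; auto. unfold K2; lra. }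
  destruct HCd as [dd [Hdd HCd]].
  assert (HD : forall r, 0 < r < dA -> Rabs (w r) <= lambda * B * rpow r e * r).
  { intros r Hr. apply Rnot_lt_le. intro Hc.
    set (eta := Rabs (w r) - lambda * B * rpow r e * r).
    assert (Heta : 0 < eta) by (unfold eta; lra).
    destruct (rpow_small e (eta / (C + 1)) He ltac:(apply Rdiv_lt_0_compat; lra)) as [d0 [Hd0 Hsm]].
    set (e0 := Rmin (Rmin (r/2) (d0/2)) (dd/2)).
    assert (He0 : 0 < e0 /\ e0 <= r/2 /\ e0 <= d0/2 /\ e0 <= dd/2).
    { unfold e0. repeat split.
      apply Rmin_pos; [apply Rmin_pos|]; lra.
      eapply Rle_trans; [apply Rmin_l|apply Rmin_l].
      eapply Rle_trans; [apply Rmin_l|apply Rmin_r].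
      apply Rmin_r. }
    assert (Hw0 : Rabs (w e0) < eta).
    { pose proof (HCd e0 ltac:(lra)). pose proof (Hsm e0 ltac:(lra)).
      pose proof (rpow_nonneg e0 e).
      assert (rpow e0 e * C <= eta / (C+1) * C) by (apply Rmult_le_compat_r; lra).
      assert (eta / (C+1) * C < eta).
      { apply Rmult_lt_reg_r with (C+1); [lra|]. 
        replace (eta / (C + 1) * C * (C + 1)) with (eta * C) by (field; lra). nra. }
      lra. }
    destruct (MVT_gen w e0 r (Derive w)) as [c [Hc1 Hc2]].
    { intros x Hx. rewrite Rmin_left in Hx by lra. rewrite Rmax_right in Hx by lra.
      apply Derive_correct. apply (Hw x). lra. }
    { intros x Hx. rewrite Rmin_left in Hx by lra. rewrite Rmax_right in Hx by lra.
      apply continuity_pt_filterlim. exact (@ex_derive_continuous R_AbsRing R_NormedModule w x (proj1 (Hw x ltac:(lra)))). }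
    rewrite Rmin_left in Hc1 by lra. rewrite Rmax_right in Hc1 by lra.
    assert (Rabs (Derive w c) <= lambda * B * rpow r e).
    { eapply Rle_trans. apply HBd; lra.
      apply Rmult_le_compat_l; [nra|]. apply rpow_mono; lra. }
    assert (Rabs (w r - w e0) <= lambda * B * rpow r e * (r - e0)).
    { rewrite Hc2, Rabs_mult, (Rabs_pos_eq (r - e0)) by lra. apply Rmult_le_compat_r; lra. }
    pose proof (Rabs_triang_inv (w r) (w e0)).
    assert (0 <= lambda * B * rpow r e * e0).
    { pose proof (rpow_nonneg r e). apply Rmult_le_pos; [|lra]. apply Rmult_le_pos; [nra|lra]. }
    unfold eta in Hw0. nra. }
  assert (HE : forall r, 0 < r < dA -> Rabs (phi p (dh r)) <= lambda * B * r).
  { intros r Hr. pose proof (HD r Hr). unfold w in H.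
    rewrite Rabs_mult, (Rabs_pos_eq (rpow r _)) in H by apply rpow_nonneg. fold e in H.
    pose proof (rpow_pos r e ltac:(lra)).
    apply Rmult_le_reg_l with (rpow r e); [lra|]. nra. }
  split.
  -
    destruct (Req_dec (dh 0) 0) as [E|E]; [exact E|exfalso].
    set (c := Rabs (dh 0) / 2).
    assert (Hc : 0 < c) by (unfold c; pose proof (Rabs_pos_lt _ E); lra).
    destruct (within_eps _ _ _ _ (Hh4 0 ltac:(lra)) (mkposreal c Hc)) as [d Hd].
    set (m := rpow c (p-2) * c).
    assert (Hm : 0 < m) by (unfold m; pose proof (rpow_pos c (p-2) Hc); nra).
    set (x := Rmin (Rmin dA d) (m / (lambda * B + 1)) / 2).
    assert (Hx : 0 < x /\ x < dA /\ x < d /\ x < m / (lambda * B + 1)).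
    { assert (0 < m / (lambda * B + 1)) by (apply Rdiv_lt_0_compat; nra).
      pose proof (Rmin_l (Rmin dA d) (m / (lambda * B + 1))).
      pose proof (Rmin_r (Rmin dA d) (m / (lambda * B + 1))).
      pose proof (Rmin_l dA d). pose proof (Rmin_r dA d).
      assert (0 < Rmin (Rmin dA d) (m / (lambda * B + 1))).
      { apply Rmin_pos; [apply Rmin_pos; [lra|apply cond_pos]|lra]. }
      unfold x. lra. }
    specialize (Hd x ltac:(rewrite Rminus_0_r, Rabs_pos_eq; lra) ltac:(lra)). simpl in Hd.
    pose proof (Rabs_triang_inv (dh 0) (dh x)). rewrite <- Rabs_Ropp in Hd.
    replace (- (dh x - dh 0)) with (dh 0 - dh x) in Hd by ring.
    assert (c <= Rabs (dh x)) by (unfold c in *; lra).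
    pose proof (phi_lbound p (dh x) c Hp Hc H0). fold m in H1.
    pose proof (HE x ltac:(lra)).
    assert (lambda * B * x < m).
    { assert (Hpos : 0 < lambda * B + 1) by (pose proof (Rmult_le_pos _ _ (Rlt_le _ _ Hl) HB); lra).
      destruct Hx as [Hx0 [_ [_ Hx]]]. apply Rmult_lt_compat_l with (r := lambda * B + 1) in Hx; [|lra].
      replace ((lambda * B + 1) * (m / (lambda * B + 1))) with m in Hx by (field; lra). nra. }
    lra.
  - set (dw := fun r => if Rle_dec r 0 then 0 else Derive w r).
    assert (Hw00 : w 0 = 0) by (unfold w; rewrite rpow_zero by lra; ring).
    assert (Hdw0 : dw 0 = 0) by (unfold dw; destruct (Rle_dec 0 0); lra).
    assert (Hpos : 0 < lambda * B + 1) by (pose proof (Rmult_le_pos _ _ (Rlt_le _ _ Hl) HB); lra).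
    assert (Hsmall : forall eps : posreal, exists d : posreal, (pos d <= dA) /\ (forall y, 0 < y < pos d -> lambda * B * rpow y e < pos eps)).
    { intros eps. destruct (rpow_small e (eps / (lambda * B + 1)) He) as [d0 [Hd0 Hd0']].
      { apply Rdiv_lt_0_compat; [apply cond_pos|lra]. }
      assert (Hm : 0 < Rmin d0 dA) by (apply Rmin_pos; lra).
      exists (mkposreal _ Hm). simpl. split; [apply Rmin_r|].
      intros y Hy. pose proof (Rmin_l d0 dA). specialize (Hd0' y ltac:(lra)).
      pose proof (rpow_nonneg y e). pose proof (cond_pos eps).
      apply Rmult_lt_compat_l with (r := lambda * B + 1) in Hd0'; [|lra].
      replace ((lambda * B + 1) * (eps / (lambda * B + 1))) with (pos eps) in Hd0' by (field; lra).
      nra. }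
    exists dw. split; [|exact Hdw0]. split; [|split].
    + intros r Hr. unfold dw. destruct (Rle_dec r 0); [lra|]. apply Derive_correct. apply (Hw r Hr).
    + apply filterlim_locally. intros eps. destruct (Hsmall eps) as [d [Hd1 Hd2]].
      exists d. intros y Hy Hy0. apply ballR1 in Hy. rewrite Rminus_0_r, Rabs_pos_eq in Hy by lra.
      apply ballR. rewrite Hdw0, Hw00, !Rminus_0_r.
      apply Rle_lt_trans with (lambda * B * rpow y e); [|apply Hd2; lra].
      unfold Rdiv. rewrite Rabs_mult, Rabs_inv, (Rabs_pos_eq y) by lra.
      apply Rmult_le_reg_r with y; [lra|]. rewrite Rmult_assoc, Rinv_l, Rmult_1_r by lra.
      apply HD. lra.
    + intros r Hr. destruct (Req_dec r 0) as [Er|Er].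
      * subst r. apply filterlim_locally. intros eps. destruct (Hsmall eps) as [d [Hd1 Hd2]].
        exists d. intros y Hy Dy. apply ballR1 in Hy. rewrite Rminus_0_r in Hy.
        apply ballR. rewrite Hdw0, Rminus_0_r. unfold dw. destruct (Rle_dec y 0).
        -- rewrite Rabs_R0. apply cond_pos.
        -- rewrite Rabs_pos_eq in Hy by lra. eapply Rle_lt_trans. apply HBd; lra. apply Hd2; lra.
      * assert (Hr' : 0 < r) by lra.
        destruct (Hw r ltac:(lra)) as [_ Hc].
        assert (Edw : dw r = Derive w r) by (unfold dw; destruct (Rle_dec r 0); lra).
        rewrite Edw.
        apply filterlim_locally. intros eps.
        destruct (proj1 (filterlim_locally _ _) Hc eps) as [d Hd].
        assert (Hm : 0 < Rmin d r) by (apply Rmin_pos; [apply cond_pos|lra]).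
        exists (mkposreal _ Hm). intros y Hy Dy. apply ballR1 in Hy. simpl in Hy.
        pose proof (Rmin_l d r). pose proof (Rmin_r d r).
        assert (y > 0) by (pose proof (Rabs_def2 _ _ (Rlt_le_trans _ _ _ Hy (Rmin_r d r))); lra).
        assert (Edy : dw y = Derive w y) by (unfold dw; destruct (Rle_dec y 0); lra).
        rewrite Edy. apply Hd. apply ballR. lra.
Qed.
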